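(* Let $\Psi=(\psi_{ij})$ and $\Phi=(\phi_{ij})$ be orthogonal quantum Latin squares of order $6$ in standard form. If some entry $\psi_{ij}$ has weight $3$, then every entry $\phi_{kj}$, $k=1,\dots,6$, of the $j$-th column of $\Phi$ has weight $1$ or $2$.
   Context: A quantum Latin square (QLS) of order $n$ is an $n\times n$ matrix $\Psi=(\psi_{ij})_{1\le i,j\le n}$ whose entries are unit vectors in $\mathbb C^n$ such that the entries of each row and the entries of each column form an orthonormal basis of $\mathbb C^n$. Two QLS $\Psi=(\psi_{ij})$ and $\Phi=(\phi_{ij})$ of order $n$ are orthogonal if $\{\psi_{ij}\otimes\phi_{ij}: 1\le i,j\le n\}$ is an orthonormal basis of $\mathbb C^n\otimes\mathbb C^n$. Fix the standard orthonormal basis $\ket{1},\dots,\ket{n}$ of $\mathbb C^n$. The support of a vector $v$ is $\{k:\braket{k}{v}\neq 0\}$ and its weight is the size of its support. A pair $\Psi,\Phi$ is in standard form if $\psi_{1j}=\phi_{1j}=\ket{j}$ for all $j=1,\dots,n$. *)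

(* Defs.v *)
From HB Require Import structures.
From mathcomp Require Import all_boot all_order all_algebra.
From mathcomp Require Import complex.
From mathcomp Require Import reals.
Set Implicit Arguments. Unset Strict Implicit. Unset Printing Implicit Defensive.
Import Order.TTheory GRing.Theory Num.Theory.
Local Open Scope ring_scope.

Section QLS.
Variable R : realType.
Local Notation C := (R[i]).

Definition cdot (I : finType) (u v : I -> C) : C :=
  \sum_(k : I) (u k)^* * v k.

Definition orthonormal (I J : finType) (f : J -> I -> C) : Prop :=
  forall a b : J, cdot (f a) (f b) = (a == b)%:R.

Definition is_onb (I J : finType) (f : J -> I -> C) : Prop :=
  #|J| = #|I| /\ orthonormal f.

(* vectors of C^n, coordinates indexed by 'I_n (standard basis |1>..|n>
   corresponds to indices 0..n-1) *)
Definition cvec (n : nat) := 'I_n -> C.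

Definition ket (n : nat) (j : 'I_n) : cvec n := fun k => (k == j)%:R.

Definition tensor (n : nat) (u v : cvec n) : 'I_n * 'I_n -> C :=
  fun p => u p.1 * v p.2.

Definition support (n : nat) (v : cvec n) : {set 'I_n} := [set k | v k != 0].
Definition weight (n : nat) (v : cvec n) : nat := #|support v|.

Definition QLS (n : nat) (Psi : 'I_n -> 'I_n -> cvec n) : Prop :=
  (forall i, is_onb (fun j => Psi i j)) /\ (forall j, is_onb (fun i => Psi i j)).

Definition orthogonal_QLS (n : nat) (Psi Phi : 'I_n -> 'I_n -> cvec n) : Prop :=
  is_onb (fun p : 'I_n * 'I_n => tensor (Psi p.1 p.2) (Phi p.1 p.2)).

Definition standard_form (n : nat) (Psi Phi : 'I_(n.+1) -> 'I_(n.+1) -> cvec n.+1) : Prop :=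
  forall j, Psi ord0 j = ket j /\ Phi ord0 j = ket j.

End QLS.

(* Main.v *)
Require Import Defs.
From HB Require Import structures.
From mathcomp Require Import all_boot all_order all_algebra.
From mathcomp Require Import complex.
From mathcomp Require Import reals.
From mathcomp Require Import fingroup perm.
Set Implicit Arguments. Unset Strict Implicit. Unset Printing Implicit Defensive.
Import Order.TTheory GRing.Theory Num.Theory.

Fixpoint allbits (n : nat) : seq (seq bool) :=
  if n is n'.+1 then [seq b :: l | b <- [:: false; true], l <- allbits n'] else [:: [::]].
Definition allcols := Eval vm_compute in allbits 5.
Definition I5 := iota 0 5.
Fixpoint ovl (x y : seq bool) : nat :=
  match x, y with a :: x', b :: y' => (a && b) + ovl x' y' | _, _ => 0 end.
Definition nov x y := ovl x y != 1.
Definition pat := seq (seq bool).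
Definition at5 (p : pat) c m := nth false (nth [::] p c) m.
Definition tr (p : pat) : pat := [seq [seq at5 p c m | c <- I5] | m <- I5].
Definition colpw (p : pat) := all (fun c1 => all (fun c2 => (c1 < c2) ==>
   (count (fun m => at5 p c1 m && at5 p c2 m) I5 != 1)) I5) I5.
Definition hallc (p : pat) := all (fun s => count (fun c => nth false s c) I5 <=
   count (fun m => has (fun c => nth false s c && at5 p c m) I5) I5) allcols.
Definition good (p : pat) := [&& colpw (tr p), hallc p & hallc (tr p)].
Definition J : seq (seq bool * seq bool) := Eval vm_compute in
  [seq ab <- [seq (a, b) | a <- allcols, b <- allcols] |
      [&& ovl ab.1 ab.2 == 0, has id ab.1 & has id ab.2]].
Definition okj (c d : seq bool * seq bool) := nov c.1 d.1 && nov c.2 d.2.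
Definition leafok (c0 c1 c2 c3 c4 : seq bool * seq bool) :=
  good [:: c0.1; c1.1; c2.1; c3.1; c4.1] && good [:: c0.2; c1.2; c2.2; c3.2; c4.2].
Definition check :=
  all (fun c0 => if (count id c0.1 == 3) then
  all (fun c1 => if [&& 3 <= count id c1.2 & okj c0 c1] then
  all (fun c2 => if [&& okj c0 c2 & okj c1 c2] then
  all (fun c3 => if [&& okj c0 c3, okj c1 c3 & okj c2 c3] then
  all (fun c4 => if [&& okj c0 c4, okj c1 c4, okj c2 c4 & okj c3 c4] then
     ~~ leafok c0 c1 c2 c3 c4 else true) J else true) J else true) J else true) J else true) J.

Lemma check_ok : check = true.
Proof. vm_compute. reflexivity. Qed.
Definition jok (ab : seq bool * seq bool) := [&& ovl ab.1 ab.2 == 0, has id ab.1 & has id ab.2].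
Lemma Jdef : J = [seq ab <- [seq (a, b) | a <- allcols, b <- allcols] | jok ab].
Proof. by vm_compute. Qed.

Lemma mem_allcols (f : nat -> bool) : mkseq f 5 \in allcols.
Proof.
rewrite /mkseq /=.
by case: (f 0); case: (f 1); case: (f 2); case: (f 3); case: (f 4).
Qed.

Lemma ovl_mk (f g : nat -> bool) :
  ovl (mkseq f 5) (mkseq g 5) = count (fun m => f m && g m) I5.
Proof. by []. Qed.

Lemma jok_mk (f g : nat -> bool) : jok (mkseq f 5, mkseq g 5) =
  [&& count (fun m => f m && g m) I5 == 0, has f I5 & has g I5].
Proof. by []. Qed.

Lemma okj_mk (f g f' g' : nat -> bool) : okj (mkseq f 5, mkseq g 5) (mkseq f' 5, mkseq g' 5) =
  (count (fun m => f m && f' m) I5 != 1) && (count (fun m => g m && g' m) I5 != 1).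
Proof. by []. Qed.

Lemma count_mk (f : nat -> bool) : count id (mkseq f 5) = count f I5.
Proof. by []. Qed.

Lemma has_mk (f : nat -> bool) : has id (mkseq f 5) = has f I5.
Proof. by []. Qed.

Definition pwc (F : nat -> nat -> bool) := forall c1 c2, c1 < 5 -> c2 < 5 -> c1 != c2 ->
  count (fun m => F c1 m && F c2 m) I5 != 1.
Definition hallF (F : nat -> nat -> bool) := forall S : nat -> bool,
  count S I5 <= count (fun m => has (fun c => S c && F c m) I5) I5.
Definition nzF (F : nat -> nat -> bool) := forall c, c < 5 -> has (F c) I5.
Definition trF (F : nat -> nat -> bool) : nat -> nat -> bool := fun m c => F c m.
Definition propsF F := [/\ pwc F, pwc (trF F), hallF F, hallF (trF F) & nzF F].

Lemma inI5 m : m \in I5 -> m < 5.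
Proof. by rewrite mem_iota. Qed.

Lemma colpw_of (q : pat) G : (forall c m, c < 5 -> m < 5 -> at5 q c m = G c m) ->
  pwc G -> colpw q.
Proof.
move=> Hq HG; apply/allP => c1 /inI5 H1; apply/allP => c2 /inI5 H2.
apply/implyP => Hlt.
rewrite (eq_in_count (a2 := fun m => G c1 m && G c2 m)).
  by apply: (HG c1 c2 H1 H2); rewrite neq_ltn Hlt.
by move=> m /inI5 Hm; rewrite !Hq.
Qed.

Lemma hallc_of (q : pat) G : (forall c m, c < 5 -> m < 5 -> at5 q c m = G c m) ->
  hallF G -> hallc q.
Proof.
move=> Hq HG; apply/allP => s _.
apply: leq_trans (HG (nth false s)) _; rewrite leq_eqVlt; apply/orP; left; apply/eqP.
apply: eq_in_count => m /inI5 Hm; apply: eq_in_has => c /inI5 Hc; by rewrite Hq.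
Qed.

Lemma at5_mk F c m : c < 5 -> m < 5 -> at5 (mkseq (fun c => mkseq (F c) 5) 5) c m = F c m.
Proof. by move=> Hc Hm; rewrite /at5 !nth_mkseq. Qed.

Lemma at5_tr (p : pat) c m : c < 5 -> m < 5 -> at5 (tr p) c m = at5 p m c.
Proof.
move=> Hc Hm; rewrite /at5 /tr (nth_map 0) ?size_iota // (nth_map 0) ?size_iota //.
by rewrite !nth_iota.
Qed.

Lemma good_of F : propsF F -> good (mkseq (fun c => mkseq (F c) 5) 5).
Proof.
case=> _ pT hF hT _; apply/and3P; split.
- apply: (colpw_of (G := trF F)) => // c m Hc Hm.
  by rewrite at5_tr // at5_mk.
- by apply: (hallc_of (G := F)) => // c m Hc Hm; rewrite at5_mk.
- apply: (hallc_of (G := trF F)) => // c m Hc Hm.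
  by rewrite at5_tr // at5_mk.
Qed.

Lemma allifP (T : eqType) (s : seq T) (P Q : T -> bool) x :
  all (fun x => if P x then Q x else true) s -> x \in s -> P x -> Q x.
Proof. by move=> /allP H /H; case: (P x). Qed.

Lemma check_use c0 c1 c2 c3 c4 :
  c0 \in J -> c1 \in J -> c2 \in J -> c3 \in J -> c4 \in J ->
  count id c0.1 == 3 -> [&& 3 <= count id c1.2 & okj c0 c1] ->
  [&& okj c0 c2 & okj c1 c2] -> [&& okj c0 c3, okj c1 c3 & okj c2 c3] ->
  [&& okj c0 c4, okj c1 c4, okj c2 c4 & okj c3 c4] -> ~~ leafok c0 c1 c2 c3 c4.
Proof.
move=> H0 H1 H2 H3 H4 G0 G1 G2 G3 G4.
move: check_ok; rewrite /check.
move=> /allifP /(_ H0 G0) /allifP /(_ H1 G1) /allifP /(_ H2 G2) /allifP /(_ H3 G3).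
by move=> /allifP /(_ H4 G4).
Qed.

Lemma core A B : propsF A -> propsF B ->
  (forall c m, c < 5 -> m < 5 -> ~~ (A c m && B c m)) ->
  count (A 0) I5 = 3 -> 3 <= count (B 1) I5 -> False.
Proof.
move=> pA pB Hd HA HB.
set col := fun c => (mkseq (A c) 5, mkseq (B c) 5).
have memJ c : c < 5 -> col c \in J.
  move=> Hc; rewrite /col Jdef mem_filter allpairs_f ?mem_allcols // andbT jok_mk.
  case: pA => _ _ _ _ ->//; case: pB => _ _ _ _ -> //.
  rewrite !andbT; apply/eqP; rewrite -(count_pred0 I5); apply: eq_in_count.
  by move=> m /inI5 Hm; apply/negbTE/Hd.
have okc c d : c < 5 -> d < 5 -> c != d -> okj (col c) (col d).
  move=> Hc Hd' Hcd; rewrite /col okj_mk.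
  by case: pA => -> // _ _ _ _; case: pB => -> //.
have := check_use (memJ 0 isT) (memJ 1 isT) (memJ 2 isT) (memJ 3 isT) (memJ 4 isT).
rewrite !okc // /col !count_mk HA HB.
have := good_of pA; have := good_of pB; rewrite /mkseq /leafok => /= G1 G2.
by rewrite G1 G2 => /(_ isT isT isT isT isT).
Qed.
Lemma countI5 (P : pred 'I_5) : count (fun m => P (inord m)) I5 = #|P|.
Proof.
rewrite /I5 -val_enum_ord count_map.
rewrite (eq_count (a2 := P)); last by move=> x /=; rewrite inord_val.
rewrite cardE /enum_mem size_filter (@eq_filter _ _ predT) ?filter_predT //.
Qed.
Lemma hasI5 (P : pred 'I_5) : has (fun m => P (inord m)) I5 = [exists m, P m].
Proof.
rewrite /I5 -val_enum_ord has_map.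
apply/hasP/existsP => [[x _ /=]|[x Hx]]; first by rewrite inord_val; exists x.
by exists x; rewrite ?mem_enum //= inord_val.
Qed.

Section Ana.
Variable C : numClosedFieldType.
Local Open Scope ring_scope.

Definition Fof (U : 'I_5 -> 'I_5 -> C) : nat -> nat -> bool :=
  fun c m => U (inord c) (inord m) != 0.
Definition colON (U : 'I_5 -> 'I_5 -> C) :=
  forall c1 c2 : 'I_5, \sum_m (U c1 m)^* * U c2 m = (c1 == c2)%:R.
Definition rowON (U : 'I_5 -> 'I_5 -> C) :=
  forall m1 m2 : 'I_5, \sum_c (U c m1)^* * U c m2 = (m1 == m2)%:R.
Definition trU (U : 'I_5 -> 'I_5 -> C) := fun m c => U c m.

Lemma pw_of U : colON U -> pwc (Fof U).
Proof.
move=> Hc c1 c2 H1 H2 H12; apply/negP => /eqP Hcnt.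
pose i1 := (inord c1 : 'I_5); pose i2 := (inord c2 : 'I_5).
have Hi : i1 != i2.
  apply: contra H12 => /eqP /(congr1 val); rewrite /= !inordK // => ->; exact: eqxx.
pose P := [pred m : 'I_5 | (U i1 m != 0) && (U i2 m != 0)].
have HP : #|P| = 1%N by rewrite -countI5.
have /card_gt0P [m0 Pm0] : (0 < #|P|)%N by rewrite HP.
have Hrest m : m != m0 -> ~~ P m.
  move=> Hm; have := cardD1 m0 P; rewrite HP Pm0 add1n => /eq_add_S /esym /card0_eq /(_ m).
  by rewrite !inE Hm => /= ->.
have := Hc i1 i2; rewrite (negbTE Hi) (bigD1 m0) //= big1 ?addr0.
  move: Pm0; rewrite !inE => /andP [Ha Hb] /eqP.
  by rewrite mulf_eq0 conjC_eq0 (negbTE Ha) (negbTE Hb).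
move=> m /Hrest; rewrite !inE negb_and !negbK => /orP [] /eqP ->.
  by rewrite conjC0 mul0r.
by rewrite mulr0.
Qed.

Lemma hall_of U : colON U -> rowON U -> hallF (Fof U).
Proof.
move=> Hc Hr S.
pose P := [pred c : 'I_5 | S c].
pose X := [pred m : 'I_5 | [exists c, P c && (U c m != 0)]].
have -> : count S I5 = #|P|.
  rewrite -countI5; apply: eq_in_count => c /inI5 Hc'; by rewrite /= inordK.
have -> : count (fun m => has (fun c => S c && Fof U c m) I5) I5 = #|X|.
  rewrite -countI5; apply: eq_in_count => m /inI5 Hm; rewrite [RHS]/=.
  rewrite -(hasI5 (fun c => P c && (U c (inord m) != 0))).
  by apply: eq_in_has => c /inI5 Hc' /=; rewrite inordK.
rewrite -(ler_nat C).
pose t c m := (U c m)^* * U c m.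
have t_ge0 c m : 0 <= t c m by rewrite /t mulrC mul_conjC_ge0.
have E1 : (#|P|%:R : C) = \sum_(c in P) \sum_(m in X) t c m.
  have -> : (#|P|%:R : C) = \sum_(c in P) 1 by rewrite sumr_const.
  apply: eq_bigr => c Pc.
  have := Hc c c; rewrite eqxx /= mulr1n => <-.
  rewrite (bigID (mem X)) /= [X in _ + X]big1 ?addr0 //.
  move=> m Xm; suff -> : U c m = 0 by rewrite mulr0.
  apply/eqP; apply: contraNT Xm => Hu; rewrite !inE; apply/existsP; exists c.
  by rewrite Hu andbT; move: Pc; rewrite inE.
rewrite E1 exchange_big /=.
have -> : (#|X|%:R : C) = \sum_(m in X) 1.
  by rewrite sumr_const.
apply: ler_sum => m _.
have := Hr m m; rewrite eqxx /= mulr1n => <-.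
rewrite [X in _ <= X](bigID (mem P)) /= lerDl.
by apply: sumr_ge0 => c _; exact: t_ge0.
Qed.

Lemma nz_of U : colON U -> nzF (Fof U).
Proof.
move=> Hc c Hc5.
have -> : has (Fof U c) I5 = [exists m, U (inord c) m != 0].
  exact: (hasI5 (fun m' => U (inord c) m' != 0)).
case: (boolP [exists m, U (inord c) m != 0]) => // /negP Hz; exfalso.
have := Hc (inord c) (inord c); rewrite eqxx /= mulr1n big1.
  by move=> /eqP; rewrite eq_sym oner_eq0.
move=> m _; case: (boolP (U (inord c) m != 0)) => [Hm|].
  by exfalso; apply: Hz; apply/existsP; exists m.
by rewrite negbK => /eqP ->; rewrite mulr0.
Qed.

Lemma props_of U : colON U -> rowON U -> propsF (Fof U).
Proof.
move=> Hc Hr; split.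
- exact: pw_of.
- exact: (@pw_of (trU U)).
- exact: hall_of.
- exact: (@hall_of (trU U)).
- exact: nz_of.
Qed.

End Ana.

Section Main.
Variable R : realType.
Local Notation C := (R[i]).
Local Open Scope ring_scope.

Lemma cdot_ket (n : nat) (j : 'I_n) (v : cvec R n) : cdot (ket R j) v = v j.
Proof.
rewrite /cdot (bigD1 j) //= big1 ?addr0.
  by rewrite /ket eqxx conjC1 mul1r.
by move=> x Hx; rewrite /ket (negbTE Hx) conjC0 mul0r.
Qed.

Lemma ket_entry (n : nat) (j x : 'I_n) : x != j -> ket R j x = 0 :> C.
Proof. by move=> H; rewrite /ket (negbTE H). Qed.

Lemma weight_ket (n : nat) (j : 'I_n) : weight (ket R j) = 1%N.
Proof.
rewrite /weight (_ : Defs.support (ket R j) = [set j]) ?cards1 //.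
apply/setP => x; rewrite /Defs.support !inE /ket pnatr_eq0; by case: (x == j).
Qed.

Lemma complete6 (f : 'I_6 -> cvec R 6) : Defs.orthonormal f ->
  forall x y, \sum_a (f a x)^* * f a y = (x == y)%:R.
Proof.
move=> Hon x y.
pose L := \matrix_(a < 6, z < 6) (f a z)^*.
pose M := \matrix_(z < 6, b < 6) f b z.
have H : L *m M = 1%:M.
  apply/matrixP => a b; rewrite !mxE -(Hon a b) /cdot.
  by apply: eq_bigr => z _; rewrite !mxE.
have := mulmx1C H; move/matrixP/(_ y x); rewrite !mxE eq_sym => <-.
by apply: eq_bigr => a _; rewrite !mxE mulrC.
Qed.

Variables Psi Phi : 'I_6 -> 'I_6 -> cvec R 6.

Lemma disj_entry : orthogonal_QLS Psi Phi -> standard_form Psi Phi ->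
  forall a b m, a != ord0 -> Psi a b m * Phi a b m = 0.
Proof.
move=> [_ Hon] Hst a b m Ha.
have := Hon (ord0, m) (a, b); rewrite /= xpair_eqE eq_sym (negbTE Ha) /=.
case: (Hst m) => -> ->.
rewrite /cdot (bigD1 (m, m)) //= big1 ?addr0.
  by rewrite /tensor /= /ket eqxx mulr1 conjC1 mul1r.
move=> [x y] /=; rewrite xpair_eqE negb_and => Hxy.
rewrite /tensor /=; case/orP: Hxy => H.
  by rewrite ket_entry // mul0r conjC0 mul0r.
by rewrite (ket_entry H) mulr0 conjC0 mul0r.
Qed.
End Main.

Section Main2.
Variable R : realType.
Local Notation C := (R[i]).
Local Open Scope ring_scope.

Lemma col_zero (F : 'I_6 -> 'I_6 -> cvec R 6) :
  (forall j, is_onb (fun i => F i j)) -> (forall j, F ord0 j = ket R j) ->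
  forall a j, a != ord0 -> F a j j = 0.
Proof.
move=> Hq Hst a j Ha; have := (Hq j).2 ord0 a.
by rewrite /= Hst cdot_ket eq_sym (negbTE Ha).
Qed.

Definition UF (F : 'I_6 -> 'I_6 -> cvec R 6) (j : 'I_6) (s : 'I_5 -> 'I_5) : 'I_5 -> 'I_5 -> C :=
  fun c m => F (lift ord0 (s c)) j (lift j m).

Lemma UF_col F j s : (forall j, is_onb (fun i => F i j)) -> (forall j, F ord0 j = ket R j) ->
  injective s -> colON (UF F j s).
Proof.
move=> Hq Hst sinj c1 c2.
have := (Hq j).2 (lift ord0 (s c1)) (lift ord0 (s c2)); rewrite /= /cdot (bigD1_ord j) //=.
rewrite (col_zero Hq Hst) ?conjC0 ?mul0r ?add0r; last by rewrite eq_sym neq_lift.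
by rewrite (inj_eq (@lift_inj _ ord0)) (inj_eq sinj) => <-.
Qed.

Lemma UF_row F j s : (forall j, is_onb (fun i => F i j)) -> (forall j, F ord0 j = ket R j) ->
  injective s -> rowON (UF F j s).
Proof.
move=> Hq Hst sinj m1 m2.
have := complete6 (Hq j).2 (lift j m1) (lift j m2).
rewrite big_ord_recl Hst [ket R j (lift j m2)]ket_entry ?mulr0 ?add0r; last by rewrite eq_sym neq_lift.
rewrite (inj_eq (@lift_inj _ j)) => <-.
rewrite /UF; apply: esym; exact: (reindex_inj sinj).
Qed.

Lemma weight_count (v : cvec R 6) (j : 'I_6) : v j = 0 ->
  weight v = count (fun m => v (lift j (inord m)) != 0) I5.
Proof.
move=> Hj; rewrite (countI5 (fun m => v (lift j m) != 0)) /weight.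
rewrite (_ : Defs.support v = lift j @: [set m | v (lift j m) != 0]).
  by rewrite card_imset; [apply: eq_card => m; rewrite inE | exact: lift_inj].
apply/setP => x; rewrite /Defs.support inE; case: (unliftP j x) => [m ->|->].
  apply/idP/imsetP => [H|[m' Hm' /lift_inj ->]]; last by rewrite inE in Hm'.
  by exists m; rewrite ?inE.
rewrite Hj eqxx; apply/esym/negP => /imsetP [m' _ /eqP]; by rewrite (negbTE (neq_lift _ _)).
Qed.

Lemma perm01 (ci ck : 'I_5) : ci != ck ->
  exists s : 'I_5 -> 'I_5, [/\ injective s, s (inord 0) = ci & s (inord 1) = ck].
Proof.
move=> Hne; pose p := tperm (inord 0 : 'I_5) ci; pose q := tperm (inord 1 : 'I_5) (p ck).
exists (fun c => p (q c)); split.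
- by move=> x y /perm_inj /perm_inj.
- have H10 : (inord 1 : 'I_5) != inord 0 by apply/eqP => /(congr1 val); rewrite /= !inordK.
  have Hp : p ck != inord 0.
    apply: contra Hne => /eqP H; apply/eqP.
    by rewrite -[ck](tpermK (inord 0 : 'I_5) ci) -/p H tpermL.
  by rewrite /q tpermD // /p tpermL.
- by rewrite /q tpermL /p tpermK.
Qed.

End Main2.

Local Open Scope ring_scope.

Theorem mainTheorem7 (R : realType) (Psi Phi : 'I_6 -> 'I_6 -> cvec R 6) :
  QLS Psi -> QLS Phi -> orthogonal_QLS Psi Phi -> standard_form Psi Phi ->
  forall i j : 'I_6, weight (Psi i j) = 3%N ->
  forall k : 'I_6, (weight (Phi k j) = 1%N \/ weight (Phi k j) = 2%N).
Proof.
move=> [_ HqP] [_ HqF] Hort Hst i j Hwi k.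
have HsP : forall j, Psi ord0 j = ket R j by move=> j'; case: (Hst j').
have HsF : forall j, Phi ord0 j = ket R j by move=> j'; case: (Hst j').
have Hi0 : i != ord0 by apply/eqP => Hi; move: Hwi; rewrite Hi HsP weight_ket.
case: (unliftP ord0 i) Hi0 Hwi => [ci ->|->]; last by rewrite eqxx.
move=> _ Hwi.
case: (unliftP ord0 k) => [ck ->|->]; last by left; rewrite HsF weight_ket.
set v := Phi (lift ord0 ck) j.
have H1 : (0 < weight v)%N.
  apply/card_gt0P; case: (boolP [exists x, x \in Defs.support v]) => [/existsP //|].
  rewrite negb_exists => /forallP Hz; exfalso.
  have := (HqF j).2 (lift ord0 ck) (lift ord0 ck); rewrite /= eqxx /= mulr1n /cdot big1.
    by move=> /eqP; rewrite eq_sym oner_eq0.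
  move=> x _; have := Hz x; rewrite /Defs.support inE negbK => /eqP.
  by rewrite /v => ->; rewrite mulr0.
have H3 : ~~ (2 < weight v)%N.
  apply/negP => H3.
  case: (eqVneq ci ck) => [Heq|Hneq].
    pose S := Defs.support (Psi (lift ord0 ci) j).
    pose T := Defs.support v.
    have HST : S :&: T = set0.
      apply/setP => x; rewrite /S /T /Defs.support !inE /v -Heq.
      have := @disj_entry R Psi Phi Hort Hst (lift ord0 ci) j x.
      rewrite eq_sym neq_lift => /(_ isT) /eqP; rewrite mulf_eq0.
      by case/orP => /eqP ->; rewrite eqxx ?andbF.
    have Hsub : S :|: T \subset [set~ j].
      apply/subsetP => x; rewrite /S /T /Defs.support !inE /v -Heq.
      apply: contraTN => /eqP ->; rewrite !(col_zero HqP HsP) ?(col_zero HqF HsF) ?eqxx //;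
        by rewrite eq_sym neq_lift.
    have := subset_leq_card Hsub; rewrite cardsC1 card_ord.
    have := cardsUI S T; rewrite HST cards0 addn0 => ->.
    move: Hwi H3; rewrite /weight -/S -/T => -> H3.
    move=> H; suff : (6 <= 5)%N by []; apply: leq_trans H; rewrite (leq_add2l 3); exact: H3.
  have [s [sinj s0 s1]] := perm01 Hneq.
  pose U := UF Psi j s; pose V := UF Phi j s.
  apply: (core (A := Fof U) (B := Fof V)).
  - by apply: props_of; [exact: UF_col | exact: UF_row].
  - by apply: props_of; [exact: UF_col | exact: UF_row].
  - move=> c m _ _; rewrite /Fof /U /V /UF -negb_or -mulf_eq0 negbK.
    by apply/eqP/(disj_entry Hort Hst); rewrite eq_sym neq_lift.
  - rewrite -Hwi (weight_count (j := j)); last by rewrite (col_zero HqP HsP) // eq_sym neq_lift.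
    by rewrite /Fof /U /UF s0.
  - move: H3; rewrite /v (weight_count (j := j)); last by rewrite (col_zero HqF HsF) // eq_sym neq_lift.
    by rewrite /Fof /V /UF s1.
move: H1 H3; case: (weight v) => [|[|[|n]]] //= _ _; [left | right]; by [].
Qed.
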